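(* Let $A\in\mathbb{R}^{d\times d}$ with $A\succ0$ and $u,v\in\mathbb{R}^d$. If $2\langle vv^\top,A^{-1}\rangle<1$, then for every $X\succeq0$, \[ \langle X,(A-vv^\top+uu^\top)^{-1}\rangle\le\langle X,A^{-1}\rangle+\frac{\langle X,A^{-1}vv^\top A^{-1}\rangle}{1-2\langle vv^\top,A^{-1}\rangle}-\frac{\langle X,A^{-1}uu^\top A^{-1}\rangle}{1+2\langle uu^\top,A^{-1}\rangle}. \]
   Context: $\langle M,N\rangle=\operatorname{tr}(M^\top N)$ is the Frobenius inner product. *)

(* Defs.v *)
From mathcomp Require Import all_boot all_order all_algebra.
Set Implicit Arguments. Unset Strict Implicit. Unset Printing Implicit Defensive.
Import Order.TTheory GRing.Theory Num.Theory.
Local Open Scope ring_scope.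

Definition frob (R : numDomainType) (d : nat) (M N : 'M[R]_d) : R :=
  \tr (M^T *m N).

Definition posdef (R : numDomainType) (d : nat) (A : 'M[R]_d) : Prop :=
  A^T = A /\ forall x : 'cV[R]_d, x != 0 -> 0 < (x^T *m A *m x) 0 0.

Definition psd (R : numDomainType) (d : nat) (X : 'M[R]_d) : Prop :=
  X^T = X /\ forall x : 'cV[R]_d, 0 <= (x^T *m X *m x) 0 0.

(* Main.v *)
Require Import Defs.
From mathcomp Require Import all_boot all_order all_algebra.
From mathcomp Require Import ring lra.
Import Order.TTheory GRing.Theory Num.Theory.
Local Open Scope ring_scope.


Lemma cs_comb (R : realFieldType) (x y q : R) : 0 <= x -> 0 <= y -> q^+2 <= x*y -> 0 <= x + y + 2*q.
Proof. move=> hx hy hq. rewrite leNgt; apply/negP => hlt.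
have h1 : 0 < -2*q - (x+y) by lra.
have h2 : 0 <= -2*q + (x+y) - 2 * (x + y) + 2*(x+y) by lra.
have h3 : 0 < (-2*q - (x+y)) * (-2*q + (x+y)).
  apply: mulr_gt0 => //; lra.
have h4 : 0 <= (x - y)^+2 by apply: sqr_ge0.
nra. Qed.

Lemma key (R : realFieldType) (T a b m P Q Rw : R) : 0<=a -> 2*a<1 -> 0<=b -> m^+2 <= a*b -> 0<=P -> 0<=Rw -> Q^+2 <= P*Rw ->
  T - (1 + -1*a)^-1 * -1 * Rw
   - (1 + 1*(b - (1 + -1*a)^-1 * -1 * (m * m)))^-1 * 1
     * (P + 2*(-((1 + -1*a)^-1 * -1 * m))*Q + (-((1 + -1*a)^-1 * -1 * m))^+2*Rw)
  <= T + Rw/(1-2*a) - P/(1+2*b).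
Proof.
move=> ha ha2 hb hm hP hR hQ.
have h1a : 0 < 1 - a by lra.
have h12a : 0 < 1 - 2*a by lra.
set D := 1 + b + m * m/(1-a).
have hD : 0 < D.
  rewrite /D; have : 0 <= m * m/(1-a) by apply: divr_ge0; [nra| lra]. lra.
set E := 1 + 2*b.
have hE : 0 < E by rewrite /E; lra.
set t := m/(1-a).
set p := 1/D - 1/E.
set q := t/D.
set r := 1/(1-2*a) - 1/(1-a) + t^+2/D.
have eq : T + Rw/(1-2*a) - P/(1+2*b) - (T - (1 + -1*a)^-1 * -1 * Rw
   - (1 + 1*(b - (1 + -1*a)^-1 * -1 * (m * m)))^-1 * 1
     * (P + 2*(-((1 + -1*a)^-1 * -1 * m))*Q + (-((1 + -1*a)^-1 * -1 * m))^+2*Rw))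
   = p*P + r*Rw + 2*(q*Q).
  rewrite /p /r /q /t /D /E. field.
  have : 0 < (1 + b) * (1 - a) + m * m by nra.
  move=> h; rewrite !lt0r_neq0 //; lra.
have hK : 1/(1-2*a) - 1/(1-a) = a/((1-2*a)*(1-a)) by field; rewrite !lt0r_neq0 //; lra.
have hEDe : E - D = (b*(1-a) - m * m)/(1-a) by rewrite /E /D; field; rewrite lt0r_neq0.
have hED : 0 <= E - D by rewrite hEDe; apply: divr_ge0; nra.
have hp0 : p = (E - D)/(D*E) by rewrite /p; field; rewrite !lt0r_neq0.
have hp : 0 <= p by rewrite hp0; apply: divr_ge0 => //; nra.
have hr : 0 <= r.
  rewrite /r hK; apply: addr_ge0; apply: divr_ge0 => //; try nra.
have hpr : p*r - q^+2 = (a*b - m^+2)/((1-2*a)*(1-a)*D*E).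
  rewrite /p /r /q /t /D /E. field.
  have : 0 < (1 + b) * (1 - a) + m * m by nra.
  move=> h; rewrite !lt0r_neq0 //; lra.
have hqpr : q^+2 <= p*r.
  rewrite -subr_ge0 hpr; apply: divr_ge0; first lra.
  apply: mulr_ge0; last lra. apply: mulr_ge0; last lra. nra.
rewrite /E -subr_ge0 eq.
apply: cs_comb; [exact: mulr_ge0 | exact: mulr_ge0 |].
have e1 : (q*Q)^+2 = q^+2*Q^+2 by ring.
have e2 : p*P*(r*Rw) = (p*r)*(P*Rw) by ring.
rewrite e1 e2; apply: ler_pM; rewrite ?sqr_ge0 //.
Qed.


Section M.
Variable R : realFieldType.
Variable d : nat.
Implicit Types (S C M N : 'M[R]_d) (p q x y : 'cV[R]_d).

Lemma entB (M N : 'M[R]_1) k : (M - k *: N) 0 0 = M 0 0 - k * N 0 0.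
Proof. by rewrite !mxE. Qed.
Lemma entZ (M : 'M[R]_1) k : (k *: M) 0 0 = k * M 0 0.
Proof. by rewrite !mxE. Qed.

Definition bf S p q : R := (p^T *m S *m q) 0 0.

Lemma bf_sym S p q : S^T = S -> bf S q p = bf S p q.
Proof.
move=> hS; rewrite /bf -[in LHS](trmxK (q^T *m S *m p)) mxE.
by rewrite !trmx_mul !trmxK hS mulmxA.
Qed.

Lemma bf_expand S p q t : S^T = S ->
  bf S (p + t *: q) (p + t *: q) = bf S p p + 2 * t * bf S p q + t^+2 * bf S q q.
Proof.
move=> hS; have hT : (p + t *: q)^T = p^T + t *: q^T by rewrite linearD linearZ.
rewrite /bf hT !mulmxDl !mulmxDr.
rewrite -!scalemxAl -!scalemxAr !mxE.
have := bf_sym S p q hS; rewrite /bf !mxE => ->. ring.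
Qed.

Lemma bf_lin S1 S2 k p q : bf (S1 - k *: S2) p q = bf S1 p q - k * bf S2 p q.
Proof.
rewrite /bf mulmxBr -scalemxAr mulmxBl -scalemxAl.
by rewrite entB.
Qed.

Lemma bf_outer p q x y : bf (p *m q^T) x y = (x^T *m p) 0 0 * (q^T *m y) 0 0.
Proof.
rewrite /bf !mulmxA -(mulmxA (x^T *m p)) {1}[x^T *m p]mx11_scalar mul_scalar_mx.
by rewrite entZ.
Qed.

Lemma frob_outer_l p q N : frob (p *m q^T) N = bf N p q.
Proof.
by rewrite /frob /bf trmx_mul trmxK -[q *m p^T *m N]mulmxA mxtrace_mulC trace_mx11.
Qed.

Lemma frob_outer_r X p q : frob X (p *m q^T) = bf X^T q p.
Proof.
by rewrite /frob /bf [X^T *m (p *m q^T)]mulmxA mxtrace_mulC mulmxA trace_mx11.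
Qed.

Lemma frobB X M N k : frob X (M - k *: N) = frob X M - k * frob X N.
Proof. by rewrite /frob mulmxBr -scalemxAr linearB linearZ. Qed.

Lemma inv_from_right C N : C *m N = 1%:M -> invmx C = N.
Proof.
move=> h; have [hu _] := mulmx1_unit h.
by rewrite -[invmx C]mulmx1 -h mulmxA mulVmx // mul1mx.
Qed.

Lemma SM C p e : C \in unitmx -> (invmx C)^T = invmx C ->
  1 + e * bf (invmx C) p p != 0 ->
  (C + e *: (p *m p^T)) *m
     (invmx C - ((1 + e * bf (invmx C) p p)^-1 * e) *: ((invmx C *m p) *m (invmx C *m p)^T))
  = 1%:M.
Proof.
move=> hu hs hn.
set l := bf (invmx C) p p; set k := ((1 + e * l)^-1 * e).
have -> : ((invmx C) *m p)^T = p^T *m (invmx C) by rewrite trmx_mul hs.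
have e1 : C *m (invmx C) = 1%:M by rewrite mulmxV.
have e2 : C *m ((invmx C) *m p *m (p^T *m (invmx C))) = (p *m (p^T *m (invmx C))) by rewrite !mulmxA e1 mul1mx -mulmxA.
have e3 : (p *m p^T) *m (invmx C) = (p *m (p^T *m (invmx C))) by rewrite -mulmxA.
have e4 : (p *m p^T) *m ((invmx C) *m p *m (p^T *m (invmx C))) = l *: (p *m (p^T *m (invmx C))).
  have h : p^T *m ((invmx C) *m p *m (p^T *m (invmx C))) = (p^T *m (invmx C) *m p) *m (p^T *m (invmx C)) by rewrite !mulmxA.
  rewrite -mulmxA h [p^T *m (invmx C) *m p]mx11_scalar mul_scalar_mx -scalemxAr.
  by rewrite /l /bf.
rewrite mulmxDl !mulmxBr e1 -!scalemxAr e2.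
rewrite -!scalemxAl e3 e4 !scalerA.
have hk : k * (1 + e * l) = e by rewrite /k mulrAC mulVf // mul1r.
move: (p *m (p^T *m invmx C)) => P.
rewrite addrAC -addrA -!scalerBl.
have -> : e - k * e * l - k = 0 by rewrite -{1}hk; ring.
by rewrite scale0r addr0.
Qed.

Lemma disc (P Q Rr : R) : 0 <= Rr -> (forall t, 0 <= P + 2 * t * Q + t^+2 * Rr) -> Q^+2 <= P * Rr.
Proof.
move=> hR H; have [hR0|hRp] := eqVneq Rr 0.
  rewrite hR0 mulr0; case: (eqVneq Q 0) => [->|hQ]; first by rewrite expr0n.
  have := H (- (P + 1) / (2 * Q)); rewrite hR0 mulr0 addr0.
  have -> : 2 * (- (P + 1) / (2 * Q)) * Q = - (P + 1) by field; rewrite hQ.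
  lra.
have hRp' : 0 < Rr by rewrite lt_def hRp.
have := H (- Q / Rr).
have -> : P + 2 * (- Q / Rr) * Q + (- Q / Rr)^+2 * Rr = P - Q^+2 / Rr by field.
rewrite subr_ge0 ler_pdivrMr //.
Qed.

Lemma psd_cs S p q : S^T = S -> (forall x, 0 <= bf S x x) ->
  (bf S p q)^+2 <= bf S p p * bf S q q.
Proof.
move=> hS H; apply: disc; first exact: H.
by move=> t; rewrite -bf_expand.
Qed.

Lemma pd_unit (A : 'M[R]_d) : posdef A -> A \in unitmx.
Proof.
case=> hs hpd; rewrite -row_free_unit -kermx_eq0.
apply/negPn/negP => hK.
have : ~~ [forall i, [forall j, kermx A i j == 0]].
  apply: contra hK => /forallP H; apply/eqP/matrixP => i j; rewrite [RHS]mxE.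
  exact/eqP/(forallP (H i) j).
rewrite negb_forall => /existsP [i]; rewrite negb_forall => /existsP [j hij].
have hx : (row i (kermx A))^T != 0.
  apply: contra hij => /eqP hx; have := congr1 (fun Y : 'cV[R]_d => Y j 0) hx.
  by rewrite !mxE => ->.
have := hpd _ hx; rewrite trmxK -row_mul mulmx_ker row0 mul0mx mxE ltxx.
done.
Qed.

Lemma inv_nonneg (A : 'M[R]_d) : posdef A -> forall x, 0 <= bf (invmx A) x x.
Proof.
move=> hA x; have hu := pd_unit _ hA; case: hA => hs hpd.
have hiT : (invmx A)^T = invmx A by rewrite trmx_inv hs.
have -> : bf (invmx A) x x = bf A (invmx A *m x) (invmx A *m x).
  rewrite /bf trmx_mul hiT !mulmxA -(mulmxA _ (invmx A) A) mulVmx // mulmx1.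
  done.
case: (eqVneq (invmx A *m x) 0) => [->|hn].
  by rewrite /bf mulmx0 mxE.
exact/ltW/hpd.
Qed.
End M.
Arguments entB {R}.
Arguments entZ {R}.
Arguments bf {R d}.
Arguments bf_sym {R d}.
Arguments bf_expand {R d}.
Arguments bf_lin {R d}.
Arguments bf_outer {R d}.
Arguments frob_outer_l {R d}.
Arguments frob_outer_r {R d}.
Arguments frobB {R d}.
Arguments inv_from_right {R d}.
Arguments SM {R d}.
Arguments psd_cs {R d}.
Arguments pd_unit {R d}.
Arguments inv_nonneg {R d}.
Arguments disc {R}.


Theorem lemma2p13 (R : realFieldType) (d : nat) (A : 'M[R]_d) (u v : 'cV[R]_d) :
  posdef A ->
  2 * frob (v *m v^T) (invmx A) < 1 ->
  forall X : 'M[R]_d, psd X ->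
    frob X (invmx (A - v *m v^T + u *m u^T))
    <= frob X (invmx A)
       + frob X (invmx A *m v *m v^T *m invmx A) / (1 - 2 * frob (v *m v^T) (invmx A))
       - frob X (invmx A *m u *m u^T *m invmx A) / (1 + 2 * frob (u *m u^T) (invmx A)).
Proof.
move=> hA hv X [hXs hXpsd].
have hu := pd_unit A hA.
have hAiT : (invmx A)^T = invmx A by rewrite trmx_inv hA.1.
have hAin := inv_nonneg A hA.
rewrite !frob_outer_l in hv *.
set Ai := invmx A in hAiT hAin hv *.
set a := bf Ai v v in hv *.
set b := bf Ai u u.
set m := bf Ai v u.
have ha0 : 0 <= a by apply: hAin.
have hb0 : 0 <= b by apply: hAin.
have hm : m^+2 <= a * b by apply: psd_cs.
have hw : Ai *m v *m v^T *m Ai = (Ai *m v) *m (Ai *m v)^T by rewrite trmx_mul hAiT mulmxA.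
have hz : Ai *m u *m u^T *m Ai = (Ai *m u) *m (Ai *m u)^T by rewrite trmx_mul hAiT mulmxA.
rewrite hw hz !frob_outer_r hXs.
have e1 : A - v *m v^T = A + (-1) *: (v *m v^T) by rewrite scaleN1r.
have e2 : A + (-1) *: (v *m v^T) + u *m u^T = A + (-1) *: (v *m v^T) + 1 *: (u *m u^T) by rewrite scale1r.
rewrite e1 e2.
have hn1 : 1 + -1 * a != 0 by rewrite lt0r_neq0 //; lra.
have S1 := SM A v (-1) hu hAiT hn1.
have hBu := (mulmx1_unit S1).1.
have hBi := inv_from_right _ _ S1.
set B := A + (-1) *: (v *m v^T) in S1 hBu hBi *.
set k1 := (1 + -1 * a)^-1 * -1 in S1 hBi.
set w := Ai *m v in S1 hBi *.
set z := Ai *m u.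
have hBiT : (invmx B)^T = invmx B.
  by rewrite hBi -/Ai linearB linearZ /= trmx_mul trmxK hAiT.
have h1 : (u^T *m w) 0 0 = m by rewrite /m (bf_sym Ai u v hAiT) /bf mulmxA.
have h2 : (w^T *m u) 0 0 = m by rewrite /w trmx_mul hAiT.
have hσ : bf (invmx B) u u = b - k1 * (m * m).
  by rewrite hBi -/Ai bf_lin bf_outer h1 h2.
have hk1 : 0 <= - k1.
  rewrite /k1 mulrN1 opprK invr_ge0; lra.
have hn2 : 1 + 1 * bf (invmx B) u u != 0.
  rewrite hσ lt0r_neq0 //.
  have := mulr_ge0 hk1 (sqr_ge0 m). rewrite expr2. nra.
have S2 := SM B u 1 hBu hBiT hn2.
have hN := inv_from_right _ _ S2.
rewrite hN frobB frob_outer_r hXs.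
have hs : invmx B *m u = z + (- (k1 * m)) *: w.
  rewrite hBi -/Ai mulmxBl -scalemxAl -mulmxA [w^T *m u]mx11_scalar mul_mx_scalar h2.
  by rewrite scalerA scaleNr.
rewrite hs bf_expand // hσ.
rewrite hBi -/Ai frobB frob_outer_r hXs.
apply: key => //; [exact: hXpsd | exact: hXpsd | exact: psd_cs].
Qed.
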